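(* Let $A,B\subseteq\Sigma^+$, $A'\subseteq A$ and $B'\subseteq B$. If $\langle A,B\rangle$ has a deduction tree of size $k$, then $\langle A',B'\rangle$ has a deduction tree of size $k$.
   Context: Let $AP$ be a finite set of atomic propositions and $\Sigma=2^{AP}$. For $\sigma=w_0\cdots w_m\in\Sigma^+$ and $j\le m$, $\sigma^{(j)}=w_j\cdots w_m$. For $A\subseteq\Sigma^+$: $A^{\mathsf X}=\{\sigma^{(1)}:\sigma\in A,|\sigma|\ge2\}$; $A^{\mathsf G}=\{\sigma^{(j)}:\sigma\in A,0\le j<|\sigma|\}$; a future point for $A$ is $f:A\to\mathbb N$ with $f(\sigma)<|\sigma|$ for all $\sigma$, and $A^f=\{\sigma^{(f(\sigma))}:\sigma\in A\}$. For a literal $\alpha\in\{p,\neg p: p\in AP\}$, $A\models\alpha$ means $\alpha$ holds at position $0$ of every trace in $A$ and $B\perp\alpha$ means it fails at position $0$ of every trace in $B$. Proof system on terms $\langle A,B\rangle$ ($A,B\subseteq\Sigma^+$): Atomic: $\langle A,B\rangle$ if $A\models\alpha$ and $B\perp\alpha$ for some literal $\alpha$; Or: $\langle A_1\uplus A_2,B\rangle$ from $\langle A_1,B\rangle,\langle A_2,B\rangle$; And: $\langle A,B_1\uplus B_2\rangle$ from $\langle A,B_1\rangle,\langle A,B_2\rangle$; Next: $\langle A,B\rangle$ from $\langle A^{\mathsf X},B^{\mathsf X}\rangle$ if $|A^{\mathsf X}|=|A|$; WeakNext: $\langle A,B\rangle$ from $\langle A^{\mathsf X},B^{\mathsf X}\rangle$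 if $|B^{\mathsf X}|=|B|$; Future: $\langle A,B\rangle$ from $\langle A^f,B^{\mathsf G}\rangle$ for a future point $f$ for $A$; Globally: $\langle A,B\rangle$ from $\langle A^{\mathsf G},B^f\rangle$ for a future point $f$ for $B$ ($\uplus$ = disjoint union). A deduction tree for $\langle A,B\rangle$ is a finite tree of rule applications with root conclusion $\langle A,B\rangle$ in which every hypothesis is derived by a rule application; its size is its number of rule applications. *)

(* Defs.v *)
From HB Require Import structures.
From mathcomp Require Import all_boot.
From mathcomp Require Import finmap.
Set Implicit Arguments. Unset Strict Implicit. Unset Printing Implicit Defensive.
Local Open Scope fset_scope.

(* Letters: subsets of the finite set AP of atomic propositions, Sigma = 2^AP.
   A (nonempty) trace w_0 w_1 ... w_m is represented as the pair (w_0, [w_1;...;w_m]). *)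
Section Traces.
Variable AP : finType.
Definition letter := {set AP}.
Definition trace := (letter * seq letter)%type.

Definition tword (s : trace) : seq letter := s.1 :: s.2.
Definition tlen (s : trace) : nat := size (tword s).
(* sigma^(j) = w_j ... w_m  (meaningful for j < |sigma|) *)
Definition suffix (j : nat) (s : trace) : trace :=
  (nth s.1 (tword s) j, drop j.+1 (tword s)).

Definition setX (A : {fset trace}) : {fset trace} :=
  [fset suffix 1 s | s in A & 2 <= tlen s].
Definition setG (A : {fset trace}) : {fset trace} :=
  \bigcup_(s <- A) [fset suffix j s | j in iota 0 (tlen s)].
Definition future_point (A : {fset trace}) (f : trace -> nat) : Prop :=
  forall s, s \in A -> f s < tlen s.
Definition setF (A : {fset trace}) (f : trace -> nat) : {fset trace} :=
  [fset suffix (f s) s | s in A].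

(* literals: (p, true) is p, (p, false) is ~p *)
Definition literal := (AP * bool)%type.
Definition lit_holds (a : literal) (w : letter) : bool := (a.1 \in w) == a.2.
Definition models (A : {fset trace}) (a : literal) : Prop :=
  forall s, s \in A -> lit_holds a s.1.
Definition perp (B : {fset trace}) (a : literal) : Prop :=
  forall s, s \in B -> ~~ lit_holds a s.1.

(* deriv A B k : <A,B> has a deduction tree with k rule applications *)
Inductive deriv : {fset trace} -> {fset trace} -> nat -> Prop :=
| D_atomic A B (a : literal) :
    models A a -> perp B a -> deriv A B 1
| D_or A1 A2 B k1 k2 :
    [disjoint A1 & A2] -> deriv A1 B k1 -> deriv A2 B k2 ->
    deriv (A1 `|` A2) B (k1 + k2).+1
| D_and A B1 B2 k1 k2 :
    [disjoint B1 & B2] -> deriv A B1 k1 -> deriv A B2 k2 ->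
    deriv A (B1 `|` B2) (k1 + k2).+1
| D_next A B k :
    #|` setX A| = #|` A| -> deriv (setX A) (setX B) k -> deriv A B k.+1
| D_weaknext A B k :
    #|` setX B| = #|` B| -> deriv (setX A) (setX B) k -> deriv A B k.+1
| D_future A B (f : trace -> nat) k :
    future_point A f -> deriv (setF A f) (setG B) k -> deriv A B k.+1
| D_globally A B (f : trace -> nat) k :
    future_point B f -> deriv (setG A) (setF B f) k -> deriv A B k.+1.
End Traces.

(* Main.v *)
Require Import Defs.
From mathcomp Require Import all_boot finmap zify.
Import Defs.
Local Open Scope fset_scope.
Section S.
Variable AP : finType.
Implicit Types A B : {fset trace AP}.

Lemma setX_sub A A' : A' `<=` A -> setX A' `<=` setX A.
Proof.
move=> H; apply/fsubsetP => x /imfsetP [s /= /andP[sA' l] ->].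
apply/imfsetP; exists s => //=. by rewrite inE l andbT; apply: (fsubsetP H).
Qed.

Lemma setX_card A : #|` setX A| <= #|` A|.
Proof.
apply: (@leq_trans #|` [fset suffix 1 s | s in A]|).
  apply: fsubset_leq_card; apply/fsubsetP => x /imfsetP [s /= /andP[sA _] ->].
  by apply/imfsetP; exists s.
apply: leq_trans (leq_imfset_card _ _ _) _.
by rewrite /enum_finmem.
Qed.

Lemma setX_split A A' : Defs.setX A `<=` Defs.setX A' `|` Defs.setX (A `\` A').
Proof.
apply/fsubsetP => x /imfsetP [s /= /andP[sA l] ->].
apply/fsetUP; case sA': (s \in A'); [left|right]; apply/imfsetP; exists s => //=.
  by rewrite inE sA' l.
by rewrite !inE sA' sA l.
Qed.

Lemma setX_cardsub A A' : A' `<=` A -> #|` Defs.setX A| = #|` A| ->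
  #|` Defs.setX A'| = #|` A'|.
Proof.
move=> H E.
have h1 := fsubset_leq_card (setX_split A A').
have h2 := leq_card_fsetU (Defs.setX A') (Defs.setX (A `\` A')).
move: h2 => [h2 _].
have h3 := setX_card (A `\` A').
have h4 := setX_card A'.
have h5 := cardfsDS H.
have h6 := fsubset_leq_card H.
rewrite E in h1. rewrite h5 in h3. lia.
Qed.

Lemma setG_sub A A' : A' `<=` A -> setG A' `<=` setG A.
Proof.
move=> H; apply/fsubsetP => x /bigfcupP [s /andP[sA' _] xin].
by apply/bigfcupP; exists s => //; rewrite (fsubsetP H).
Qed.

Lemma setF_sub A A' f : A' `<=` A -> setF A' f `<=` setF A f.
Proof.
move=> H; apply/fsubsetP => x /imfsetP [s /= sA' ->].
by apply/imfsetP; exists s => //=; apply: (fsubsetP H).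
Qed.

Lemma fp_sub A A' f : A' `<=` A -> future_point A f -> future_point A' f.
Proof. by move=> H fp s sA; apply: fp; apply: (fsubsetP H). Qed.

End S.

Theorem lemma10 (AP : finType) (A B A' B' : {fset trace AP}) (k : nat) :
  A' `<=` A -> B' `<=` B -> deriv A B k -> deriv A' B' k.
Proof.
move=> HA HB D; elim: D A' B' HA HB.
- move=> A0 B0 a m p A' B' HA HB; apply: (D_atomic (a:=a)).
    by move=> s sA; apply: m; apply: (fsubsetP HA).
  by move=> s sB; apply: p; apply: (fsubsetP HB).
- move=> A1 A2 B0 k1 k2 dis _ IH1 _ IH2 A' B' HA HB.
  have -> : A' = (A' `&` A1) `|` (A' `&` A2).
    by rewrite -fsetIUr; apply/esym/fsetIidPl.
  apply: D_or.
  + apply: fdisjointWl (fsubsetIr _ _) _.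
    rewrite fdisjoint_sym; apply: fdisjointWl (fsubsetIr _ _) _.
    by rewrite fdisjoint_sym.
  + by apply: IH1 => //; apply: fsubsetIr.
  + by apply: IH2 => //; apply: fsubsetIr.
- move=> A0 B1 B2 k1 k2 dis _ IH1 _ IH2 A' B' HA HB.
  have -> : B' = (B' `&` B1) `|` (B' `&` B2).
    by rewrite -fsetIUr; apply/esym/fsetIidPl.
  apply: D_and.
  + apply: fdisjointWl (fsubsetIr _ _) _.
    rewrite fdisjoint_sym; apply: fdisjointWl (fsubsetIr _ _) _.
    by rewrite fdisjoint_sym.
  + by apply: IH1 => //; apply: fsubsetIr.
  + by apply: IH2 => //; apply: fsubsetIr.
- move=> A0 B0 k0 E _ IH A' B' HA HB; apply: D_next.
    exact: setX_cardsub E.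
  by apply: IH; apply: setX_sub.
- move=> A0 B0 k0 E _ IH A' B' HA HB; apply: D_weaknext.
    exact: setX_cardsub E.
  by apply: IH; apply: setX_sub.
- move=> A0 B0 f k0 fp _ IH A' B' HA HB; apply: (D_future (f:=f)).
    exact: fp_sub fp.
  by apply: IH; [apply: setF_sub | apply: setG_sub].
- move=> A0 B0 f k0 fp _ IH A' B' HA HB; apply: (D_globally (f:=f)).
    exact: fp_sub fp.
  by apply: IH; [apply: setG_sub | apply: setF_sub].
Qed.
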